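(* Let $m\ge1$ and $\Lambda=(\lambda_1,\dots,\lambda_m)$ with each $\lambda_i$ a prime or $0$. There is a first-order formula $D_\Lambda(\bar y_1,\dots,\bar y_m)$ in the language of rings such that, in any commutative ring $B$ with unit, $B\models D_\Lambda(\bar b_1,\dots,\bar b_m)$ iff the ideals $\mathfrak q_i=id(\bar b_i)$ are proper prime ideals with $\mathfrak q_1\cdots\mathfrak q_m=0$ and $\mathrm{char}(B/\mathfrak q_i)=\lambda_i$ whenever $\lambda_i>0$. Moreover, let $A$ be a commutative ring with unit and $\mathfrak P=(\mathfrak p_1,\dots,\mathfrak p_m)$ finitely generated prime ideals with $\mathfrak p_1\cdots\mathfrak p_m=0$, $\Lambda=(\mathrm{char}(A/\mathfrak p_1),\dots,\mathrm{char}(A/\mathfrak p_m))$, such that $\mathfrak P$ has the least number of zero entries in its characteristic tuple among all such decompositions of $0$ into $m$ finitely generated prime ideals. Then for every ring $B\equiv A$ and all tuples $\bar b_1,\dots,\bar b_m$ in $B$ with $B\models D_\Lambda(\bar b_1,\dots,\bar b_m)$: each $\mathfrak q_i=id(\bar b_i)$ is prime, $\mathfrak q_1\cdots\mathfrak q_m=0$, and $\mathrm{char}(B/\mathfrak q_i)=\lambda_i$ for all $i=1,\dots,m$.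
   Context: $id(\bar b)$ is the ideal generated by the entries of the finite tuple $\bar b$; it is defined by the formula $\exists z_1\dots z_k\,(x=b_1z_1+\cdots+b_kz_k)$. $\mathrm{char}$ of an integral domain is its characteristic. *)

(* Defs.v *)
From HB Require Import structures.
From mathcomp Require Import all_boot all_order all_algebra.
Set Implicit Arguments. Unset Strict Implicit. Unset Printing Implicit Defensive.
Import GRing.Theory.
Local Open Scope ring_scope.

(* Terms: bound/free variables RVar n, and distinguished parameter variables
   RPar i j standing for y_{i,j} (the j-th entry of the i-th tuple y_i). *)
Inductive rterm : Type :=
| RVar of nat
| RPar of nat & nat
| RZero | ROne
| RAdd of rterm & rterm
| ROpp of rterm
| RMul of rterm & rterm.

Inductive rform : Type :=
| REq of rterm & rterm
| RFalse
| RNot of rform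
| RAnd of rform & rform
| ROr of rform & rform
| RImp of rform & rform
| RAll of nat & rform
| REx of nat & rform.

Definition set_env (R : Type) (e : nat -> R) (n : nat) (x : R) : nat -> R :=
  fun k => if k == n then x else e k.

Fixpoint teval (R : comPzRingType) (p : nat -> nat -> R) (e : nat -> R)
  (t : rterm) : R :=
  match t with
  | RVar n => e n
  | RPar i j => p i j
  | RZero => 0
  | ROne => 1
  | RAdd t u => teval p e t + teval p e u
  | ROpp t => - teval p e t
  | RMul t u => teval p e t * teval p e u
  end.

Fixpoint fholds (R : comPzRingType) (p : nat -> nat -> R) (e : nat -> R)
  (f : rform) : Prop :=
  match f with
  | REq t u => teval p e t = teval p e u
  | RFalse => False
  | RNot g => ~ fholds p e g
  | RAnd g h => fholds p e g /\ fholds p e h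
  | ROr g h => fholds p e g \/ fholds p e h
  | RImp g h => fholds p e g -> fholds p e h
  | RAll n g => forall x : R, fholds p (set_env e n x) g
  | REx n g => exists x : R, fholds p (set_env e n x) g
  end.

Fixpoint tvars (t : rterm) : seq nat :=
  match t with
  | RVar n => [:: n]
  | RPar _ _ | RZero | ROne => [::]
  | RAdd t u | RMul t u => tvars t ++ tvars u
  | ROpp t => tvars t
  end.

Fixpoint tpars (t : rterm) : seq (nat * nat) :=
  match t with
  | RPar i j => [:: (i, j)]
  | RVar _ | RZero | ROne => [::]
  | RAdd t u | RMul t u => tpars t ++ tpars u
  | ROpp t => tpars t
  end.

Fixpoint fvars (f : rform) : seq nat :=
  match f with
  | REq t u => tvars t ++ tvars u
  | RFalse => [::]
  | RNot g => fvars g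
  | RAnd g h | ROr g h | RImp g h => fvars g ++ fvars h
  | RAll n g | REx n g => filter (fun k => k != n) (fvars g)
  end.

Fixpoint fpars (f : rform) : seq (nat * nat) :=
  match f with
  | REq t u => tpars t ++ tpars u
  | RFalse => [::]
  | RNot g => fpars g
  | RAnd g h | ROr g h | RImp g h => fpars g ++ fpars h
  | RAll _ g | REx _ g => fpars g
  end.

Definition sentence (f : rform) : Prop := fvars f = [::] /\ fpars f = [::].

Definition models (R : comPzRingType) (f : rform) : Prop :=
  fholds (fun _ _ => 0 : R) (fun _ => 0 : R) f.

Definition elem_equiv (A B : comPzRingType) : Prop :=
  forall f, sentence f -> (models A f <-> models B f).

(* D is a formula D(y_1,...,y_m) where y_i has length k i *)
Definition formula_in (m : nat) (k : 'I_m -> nat) (D : rform) : Prop :=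
  fvars D = [::] /\
  (forall ij, ij \in fpars D -> exists i : 'I_m, ij.1 = i /\ ij.2 < k i)%N.

Definition par_env (R : comPzRingType) (m : nat) (b : 'I_m -> seq R)
  : nat -> nat -> R :=
  fun i j => match (insub i : option 'I_m) with
             | Some i' => (b i')`_j
             | None => 0
             end.

Definition sat (R : comPzRingType) (m : nat) (b : 'I_m -> seq R) (D : rform)
  : Prop := fholds (par_env b) (fun _ => 0) D.

Definition idl (R : comPzRingType) (b : seq R) : R -> Prop :=
  fun x => exists z : seq R, size z = size b /\
             x = \sum_(j < size b) b`_j * z`_j.

Definition prime_ideal (R : comPzRingType) (I : R -> Prop) : Prop :=
  ~ I 1 /\ (forall x y, I (x * y) -> I x \/ I y).

Definition prod_ideal (R : comPzRingType) (m : nat) (I : 'I_m -> R -> Prop)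
  : R -> Prop :=
  fun x => exists (n : nat) (f : 'I_n -> 'I_m -> R),
     (forall l i, I i (f l i)) /\
     x = \sum_(l < n) \prod_(i < m) f l i.

Definition zero_ideal (R : comPzRingType) (I : R -> Prop) : Prop :=
  forall x, I x -> x = 0.

(* char(R/I) = c : the kernel of Z -> R/I is cZ, i.e. d.1 in I iff c | d *)
Definition quot_char (R : comPzRingType) (I : R -> Prop) (c : nat) : Prop :=
  forall d : nat, I d%:R <-> (c %| d)%N.

Definition number_of_zeros (m : nat) (c : 'I_m -> nat) : nat :=
  #|[pred i : 'I_m | c i == 0%N]|.

(* Main.v *)
Require Import Defs.
From HB Require Import structures.
From mathcomp Require Import all_boot all_order all_algebra.
From mathcomp Require Import zify.
From Stdlib Require Import FunctionalExtensionality PropExtensionality Classical IndefiniteDescription.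
Set Implicit Arguments. Unset Strict Implicit. Unset Printing Implicit Defensive.
Import GRing.Theory.
Local Open Scope ring_scope.

Definition upd (R : Type) (e : nat -> R) (n : nat) (z : nat -> R) (l : nat) : nat -> R :=
  fun v => if ((n <= v) && (v < n + l))%N then z (v - n)%N else e v.

Definition tlow (N : nat) (t : rterm) := forall v, v \in tvars t -> (v < N)%N.

Lemma tlowW N M t : tlow N t -> (N <= M)%N -> tlow M t.
Proof. by move=> H le v /H h; apply: leq_trans le. Qed.

Lemma upd_out (R : Type) (e : nat -> R) n z l v : (v < n)%N -> upd e n z l v = e v.
Proof. by move=> h; rewrite /upd leqNgt h. Qed.

Lemma upd_in (R : Type) (e : nat -> R) n z l j : (j < l)%N -> upd e n z l (n + j) = z j.
Proof. by move=> h; rewrite /upd leq_addr ltn_add2l h /= addKn. Qed.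

Lemma teval_upd (R : comPzRingType) p e n z l t :
  tlow n t -> teval p (upd e n z l) t = teval p e t :> R.
Proof.
elim: t => [v|i j|||t IHt u IHu|t IHt|t IHt u IHu] H //=.
- by rewrite upd_out //; apply: H; rewrite mem_head.
- by rewrite IHt ?IHu // => v hv; apply: H; rewrite /= mem_cat hv ?orbT.
- by rewrite IHt.
- by rewrite IHt ?IHu // => v hv; apply: H; rewrite /= mem_cat hv ?orbT.
Qed.

Fixpoint exs (n l : nat) (f : rform) : rform :=
  if l is l'.+1 then REx n (exs n.+1 l' f) else f.
Fixpoint alls (n l : nat) (f : rform) : rform :=
  if l is l'.+1 then RAll n (alls n.+1 l' f) else f.

Lemma upd0 (R : Type) (e : nat -> R) n z : upd e n z 0 = e.
Proof.
apply: functional_extensionality => v; rewrite /upd addn0.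
by case: (leqP n v) => //= h; rewrite ltnNge h.
Qed.

Definition zcons (R : Type) (x : R) (z : nat -> R) : nat -> R :=
  fun j => if j is j'.+1 then z j' else x.

Lemma upd_set (R : Type) (e : nat -> R) n x z l :
  upd (set_env e n x) n.+1 z l = upd e n (zcons x z) l.+1.
Proof.
apply: functional_extensionality => v; rewrite /upd /set_env /zcons.
case: (ltngtP v n) => [h|h|->].
- by [].
- rewrite /= addSn addnS; case: ifP => _ //.
  by have -> : (v - n = (v - n.+1).+1)%N by rewrite subnS prednK // subn_gt0.
- by rewrite /= subnn addnS ltnS leq_addr.
Qed.

Lemma zcons_eta (R : Type) (z : nat -> R) : zcons (z 0%N) (fun j => z j.+1) = z.
Proof. by apply: functional_extensionality; case. Qed.

Lemma exsP (R : comPzRingType) (p : nat -> nat -> R) l : forall e n f,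
  fholds p e (exs n l f) <-> exists z, fholds p (upd e n z l) f.
Proof.
elim: l => [|l IH] e n f /=.
  by split; [move=> h; exists (fun=> 0); rewrite upd0 | case=> z; rewrite upd0].
split.
- by case=> x /IH [z Hz]; exists (zcons x z); rewrite -upd_set.
- case=> z Hz; exists (z 0%N); apply/IH; exists (fun j => z j.+1).
  by rewrite upd_set zcons_eta.
Qed.

Lemma allsP (R : comPzRingType) (p : nat -> nat -> R) l : forall e n f,
  fholds p e (alls n l f) <-> forall z, fholds p (upd e n z l) f.
Proof.
elim: l => [|l IH] e n f /=.
  by split; [move=> h z; rewrite upd0 | move=> /(_ (fun=> 0)); rewrite upd0].
split.
- by move=> H z; rewrite -(zcons_eta z) -upd_set; apply: (proj1 (IH _ _ _) (H _)).
- by move=> H x; apply/IH => z; rewrite upd_set.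
Qed.

Fixpoint tsum (ts : seq rterm) : rterm :=
  if ts is t :: ts' then RAdd t (tsum ts') else RZero.
Fixpoint tprod (ts : seq rterm) : rterm :=
  if ts is t :: ts' then RMul t (tprod ts') else ROne.
Fixpoint natt (d : nat) : rterm :=
  if d is d'.+1 then RAdd ROne (natt d') else RZero.

Lemma teval_tsum (R : comPzRingType) (p : nat -> nat -> R) e ts :
  teval p e (tsum ts) = \sum_(t <- ts) teval p e t.
Proof. by elim: ts => [|t ts IH] /=; rewrite ?big_nil ?big_cons ?IH. Qed.
Lemma teval_tprod (R : comPzRingType) (p : nat -> nat -> R) e ts :
  teval p e (tprod ts) = \prod_(t <- ts) teval p e t.
Proof. by elim: ts => [|t ts IH] /=; rewrite ?big_nil ?big_cons ?IH. Qed.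
Lemma teval_natt (R : comPzRingType) (p : nat -> nat -> R) e d :
  teval p e (natt d) = d%:R.
Proof. by elim: d => [|d IH] //=; rewrite IH mulrS. Qed.

Lemma sum_iota (R : comPzRingType) l (G : nat -> R) :
  \sum_(j <- iota 0 l) G j = \sum_(j < l) G j.
Proof. by rewrite -(big_mkord xpredT) /index_iota subn0. Qed.
Lemma prod_iota (R : comPzRingType) l (G : nat -> R) :
  \prod_(j <- iota 0 l) G j = \prod_(j < l) G j.
Proof. by rewrite -(big_mkord xpredT) /index_iota subn0. Qed.

Definition TT := REq RZero RZero.
Fixpoint fand (fs : seq rform) : rform :=
  if fs is f :: fs' then RAnd f (fand fs') else TT.

Lemma fandP (R : comPzRingType) (p : nat -> nat -> R) e (T : eqType) (F : T -> rform) s :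
  fholds p e (fand (map F s)) <-> forall x, x \in s -> fholds p e (F x).
Proof.
elim: s => [|x s IH] /=; first by split.
rewrite IH; split.
- by case=> h1 h2 y; rewrite in_cons; case/orP => [/eqP -> //|]; apply: h2.
- by move=> h; split; [apply: h; rewrite mem_head | move=> y hy; apply: h; rewrite in_cons hy orbT].
Qed.

Definition idlf (R : comPzRingType) (bf : nat -> R) l (x : R) :=
  exists z : nat -> R, x = \sum_(j < l) bf j * z j.

Lemma idlf_ext (R : comPzRingType) (bf bf' : nat -> R) l x x' :
  (forall j, (j < l)%N -> bf j = bf' j) -> x = x' -> (idlf bf l x <-> idlf bf' l x').
Proof.
move=> H <-; split; case=> z ->; exists z; apply: eq_bigr => j _; by rewrite H.
Qed.

Definition memf n (yf : nat -> rterm) l t :=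
  exs n l (REq t (tsum (mkseq (fun j => RMul (yf j) (RVar (n + j))) l))).

Lemma memfP (R : comPzRingType) (p : nat -> nat -> R) e n yf l t :
  tlow n t -> (forall j, (j < l)%N -> tlow n (yf j)) ->
  fholds p e (memf n yf l t) <-> idlf (fun j => teval p e (yf j)) l (teval p e t).
Proof.
move=> Ht Hy; rewrite /memf exsP /=.
have E z : teval p (upd e n z l) (tsum (mkseq (fun j => RMul (yf j) (RVar (n + j))) l))
   = \sum_(j < l) teval p e (yf j) * z j.
  rewrite teval_tsum /mkseq big_map sum_iota; apply: eq_bigr => j _ /=.
  by rewrite teval_upd ?upd_in //; apply: Hy.
split.
- by case=> z /=; rewrite E teval_upd // => ->; exists z.
- by case=> z Hz; exists z => /=; rewrite E teval_upd.
Qed.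

Lemma tlow_var N v : (v < N)%N -> tlow N (RVar v).
Proof. by move=> h w; rewrite inE => /eqP ->. Qed.
Lemma tlow_novar N t : tvars t = [::] -> tlow N t.
Proof. by move=> E v; rewrite E. Qed.

Definition primef N yf l :=
  RAnd (RNot (memf N yf l ROne))
   (alls N 2 (RImp (memf N.+2 yf l (RMul (RVar N) (RVar N.+1)))
                   (ROr (memf N.+2 yf l (RVar N)) (memf N.+2 yf l (RVar N.+1))))).

Lemma primefP (R : comPzRingType) (p : nat -> nat -> R) e N yf l :
  (forall j, (j < l)%N -> tlow N (yf j)) ->
  fholds p e (primef N yf l) <-> prime_ideal (idlf (fun j => teval p e (yf j)) l).
Proof.
move=> Hy.
have Hy2 : forall j, (j < l)%N -> tlow N.+2 (yf j).
  by move=> j hj; apply: tlowW (Hy j hj) _; rewrite leqW.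
have EE z t : tlow N.+2 t -> fholds p (upd e N z 2) (memf N.+2 yf l t) <->
      idlf (fun j => teval p e (yf j)) l (teval p (upd e N z 2) t).
  move=> ht; rewrite memfP //; apply: idlf_ext => // j hj.
  by rewrite teval_upd //; apply: Hy.
have V0 z : upd e N z 2 N = z 0%N by move: (@upd_in R e N z 2 0 isT); rewrite addn0.
have V1 z : upd e N z 2 N.+1 = z 1%N by move: (@upd_in R e N z 2 1 isT); rewrite addn1.
have TM : tlow N.+2 (RMul (RVar N) (RVar N.+1)).
  by move=> v; rewrite /= !inE => /orP [] /eqP ->.
rewrite /primef; cbn [fholds]; rewrite memfP //.
rewrite allsP /prime_ideal /=; split; case=> h1 h2; split => //.
- move=> x y hxy.
  have := h2 (zcons x (zcons y (fun=> 0))).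
  rewrite /= !EE ?V0 ?V1 //; try exact: tlow_var.
  + by rewrite /= !V0 !V1; apply.
- move=> z; rewrite !EE //; try exact: tlow_var.
  by rewrite /= !V0 !V1; apply: h2.
Qed.

Definition zerof m (k : 'I_m -> nat) N (Y : nat -> nat -> rterm) :=
  alls N m (RImp (fand [seq memf (N + m) (Y (val i)) (k i) (RVar (N + i)) | i <- enum 'I_m])
                 (REq (tprod (mkseq (fun i => RVar (N + i)) m)) RZero)).

Lemma zerofP (R : comPzRingType) (p : nat -> nat -> R) e m (k : 'I_m -> nat) N (Y : nat -> nat -> rterm) :
  (forall (i : 'I_m) j, (j < k i)%N -> tlow N (Y i j)) ->
  fholds p e (zerof k N Y) <->
  forall f : 'I_m -> R, (forall i : 'I_m, idlf (fun j => teval p e (Y i j)) (k i) (f i)) ->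
    \prod_(i < m) f i = 0.
Proof.
move=> HY; rewrite /zerof allsP.
have Vi z (i : 'I_m) : upd e N z m (N + i) = z i by rewrite upd_in.
have E z : fholds p (upd e N z m)
    (fand [seq memf (N + m) (Y (val i)) (k i) (RVar (N + i)) | i <- enum 'I_m]) <->
    forall i : 'I_m, idlf (fun j => teval p e (Y i j)) (k i) (z i).
  have Ei (i : 'I_m) : fholds p (upd e N z m) (memf (N + m) (Y (val i)) (k i) (RVar (N + i)))
     <-> idlf (fun j => teval p e (Y i j)) (k i) (z i).
    rewrite memfP; first apply: idlf_ext => [j hj|]; first by rewrite teval_upd //; apply: HY.
    + by rewrite /= Vi.
    + by apply: tlow_var; rewrite ltn_add2l.
    + by move=> j hj; apply: tlowW (HY i j hj) _; rewrite leq_addr.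
  rewrite fandP; split => H i.
  - by apply/Ei; apply: H; rewrite mem_enum.
  - by move=> _; apply/Ei.
have P z : teval p (upd e N z m) (tprod (mkseq (fun i => RVar (N + i)) m)) = \prod_(i < m) z i.
  by rewrite teval_tprod /mkseq big_map prod_iota; apply: eq_bigr => i _ /=; rewrite Vi.
split.
- move=> H f Hf.
  have := H (fun v => if insub v is Some i then f i else 0).
  cbn [fholds]; rewrite E P /= => H1.
  have Ez (i : 'I_m) : (if insub (val i) is Some i' then f i' else 0) = f i by rewrite valK.
  rewrite -(eq_bigr _ (fun i _ => Ez i)); apply: H1 => i; rewrite Ez.
  exact: Hf.
- move=> H z; cbn [fholds]; rewrite E P => Hz.
  exact: (H (fun i => z i)).
Qed.

Definition build m (k Lam : 'I_m -> nat) N (Y : nat -> nat -> rterm) :=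
  RAnd (fand [seq primef N (Y (val i)) (k i) | i <- enum 'I_m])
   (RAnd (zerof k N Y)
     (fand [seq (if (0 < Lam i)%N then memf N (Y (val i)) (k i) (natt (Lam i)) else TT)
           | i <- enum 'I_m])).

Definition bprop (R : comPzRingType) m (k Lam : 'I_m -> nat) (bf : 'I_m -> nat -> R) : Prop :=
  (forall i, prime_ideal (idlf (bf i) (k i))) /\
  (forall f : 'I_m -> R, (forall i, idlf (bf i) (k i) (f i)) -> \prod_(i < m) f i = 0) /\
  (forall i, (0 < Lam i)%N -> idlf (bf i) (k i) (Lam i)%:R).

Lemma tvars_natt d : tvars (natt d) = [::].
Proof. by elim: d. Qed.

Lemma buildP (R : comPzRingType) (p : nat -> nat -> R) e m (k Lam : 'I_m -> nat) N
    (Y : nat -> nat -> rterm) :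
  (forall (i : 'I_m) j, (j < k i)%N -> tlow N (Y i j)) ->
  fholds p e (build k Lam N Y) <-> bprop k Lam (fun i j => teval p e (Y i j)).
Proof.
move=> HY; rewrite /build /bprop; cbn [fholds].
rewrite zerofP // !fandP.
have P1 : (forall x, x \in enum 'I_m -> fholds p e (primef N (Y (val x)) (k x))) <->
   (forall i : 'I_m, prime_ideal (idlf (fun j => teval p e (Y i j)) (k i))).
  split => H i.
  - by apply/(primefP _ _ (HY i)); apply: H; rewrite mem_enum.
  - by move=> _; apply/(primefP _ _ (HY i)); apply: H.
have P3 : (forall x, x \in enum 'I_m ->
    fholds p e (if (0 < Lam x)%N then memf N (Y (val x)) (k x) (natt (Lam x)) else TT)) <->
   (forall i : 'I_m, (0 < Lam i)%N -> idlf (fun j => teval p e (Y i j)) (k i) (Lam i)%:R).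
  split => H i.
  - move=> hi; move: (H i); rewrite mem_enum hi => /(_ isT).
    by rewrite memfP ?teval_natt //; [apply: tlow_novar; rewrite tvars_natt | apply: HY].
  - move=> _; case: ifP => hi //; move: (H i hi).
    by rewrite memfP ?teval_natt //; [apply: tlow_novar; rewrite tvars_natt | apply: HY].
by rewrite P1 P3.
Qed.

Definition tgood (V : nat -> Prop) (P : nat * nat -> Prop) t :=
  (forall v, v \in tvars t -> V v) /\ (forall ij, ij \in tpars t -> P ij).
Definition fgood (V : nat -> Prop) (P : nat * nat -> Prop) f :=
  (forall v, v \in fvars f -> V v) /\ (forall ij, ij \in fpars f -> P ij).

Lemma tgoodW V V' P t : tgood V P t -> (forall v, V v -> V' v) -> tgood V' P t.
Proof. by case=> h1 h2 H; split => // v /h1 /H. Qed.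
Lemma fgoodW V V' P f : fgood V P f -> (forall v, V v -> V' v) -> fgood V' P f.
Proof. by case=> h1 h2 H; split => // v /h1 /H. Qed.

Lemma tgood2 V P t u s1 s2 : tvars t ++ tvars u = s1 -> tpars t ++ tpars u = s2 ->
  tgood V P t -> tgood V P u ->
  (forall v, v \in s1 -> V v) /\ (forall ij, ij \in s2 -> P ij).
Proof.
move=> <- <- [a1 a2] [b1 b2]; split=> x; rewrite mem_cat => /orP [];
  by [move/a1|move/b1|move/a2|move/b2].
Qed.
Lemma fgood2 V P t u s1 s2 : fvars t ++ fvars u = s1 -> fpars t ++ fpars u = s2 ->
  fgood V P t -> fgood V P u ->
  (forall v, v \in s1 -> V v) /\ (forall ij, ij \in s2 -> P ij).
Proof.
move=> <- <- [a1 a2] [b1 b2]; split=> x; rewrite mem_cat => /orP [];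
  by [move/a1|move/b1|move/a2|move/b2].
Qed.

Lemma tg_add V P t u : tgood V P t -> tgood V P u -> tgood V P (RAdd t u).
Proof. exact: tgood2. Qed.
Lemma tg_mul V P t u : tgood V P t -> tgood V P u -> tgood V P (RMul t u).
Proof. exact: tgood2. Qed.
Lemma tg_var (V : nat -> Prop) P v : V v -> tgood V P (RVar v).
Proof. by move=> h; split => // w; rewrite inE => /eqP ->. Qed.
Lemma tg_zero V P : tgood V P RZero. Proof. by []. Qed.
Lemma tg_one V P : tgood V P ROne. Proof. by []. Qed.
Lemma tg_natt V P d : tgood V P (natt d).
Proof. elim: d => [|d IH] //=; exact: tg_add. Qed.

Lemma fg_eq V P t u : tgood V P t -> tgood V P u -> fgood V P (REq t u).
Proof. exact: tgood2. Qed.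
Lemma fg_and V P t u : fgood V P t -> fgood V P u -> fgood V P (RAnd t u).
Proof. exact: fgood2. Qed.
Lemma fg_or V P t u : fgood V P t -> fgood V P u -> fgood V P (ROr t u).
Proof. exact: fgood2. Qed.
Lemma fg_imp V P t u : fgood V P t -> fgood V P u -> fgood V P (RImp t u).
Proof. exact: fgood2. Qed.
Lemma fg_not V P t : fgood V P t -> fgood V P (RNot t).
Proof. by []. Qed.
Lemma fg_ex V P n g : fgood (fun v => V v \/ v = n) P g -> fgood V P (REx n g).
Proof.
case=> h1 h2; split => //= v; rewrite mem_filter => /andP [/eqP hv /h1] [] //.
Qed.
Lemma fg_all V P n g : fgood (fun v => V v \/ v = n) P g -> fgood V P (RAll n g).
Proof.
case=> h1 h2; split => //= v; rewrite mem_filter => /andP [/eqP hv /h1] [] //.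
Qed.

Lemma fg_exs P l : forall V n g, fgood (fun v => V v \/ (n <= v < n + l)%N) P g ->
  fgood V P (exs n l g).
Proof.
elim: l => [|l IH] V n g H /=.
  by apply: (fgoodW H) => v [] // /andP []; rewrite addn0 => a b; move: a b; lia.
apply: fg_ex; apply: IH; apply: (fgoodW H) => v [] ; first by move=> h; left; left.
move=> /andP [a b]; case: (eqVneq v n) => [->|ne]; first by left; right.
right; apply/andP; move: a b ne => /leP a /ltP b /eqP ne; split; apply/leP; lia.
Qed.
Lemma fg_alls P l : forall V n g, fgood (fun v => V v \/ (n <= v < n + l)%N) P g ->
  fgood V P (alls n l g).
Proof.
elim: l => [|l IH] V n g H /=.
  by apply: (fgoodW H) => v [] // /andP []; rewrite addn0 => a b; move: a b; lia.
apply: fg_all; apply: IH; apply: (fgoodW H) => v [] ; first by move=> h; left; left.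
move=> /andP [a b]; case: (eqVneq v n) => [->|ne]; first by left; right.
right; apply/andP; move: a b ne => /leP a /ltP b /eqP ne; split; apply/leP; lia.
Qed.

Lemma fg_fand V P (T : eqType) (F : T -> rform) s :
  (forall x, x \in s -> fgood V P (F x)) -> fgood V P (fand (map F s)).
Proof.
elim: s => [|x s IH] H /=; first by [].
apply: fg_and; first by apply: H; rewrite mem_head.
by apply: IH => y hy; apply: H; rewrite in_cons hy orbT.
Qed.

Lemma tg_tsum V P (F : nat -> rterm) s :
  (forall x, x \in s -> tgood V P (F x)) -> tgood V P (tsum (map F s)).
Proof.
elim: s => [|x s IH] H /=; first by [].
apply: tg_add; first by apply: H; rewrite mem_head.
by apply: IH => y hy; apply: H; rewrite in_cons hy orbT.
Qed.
Lemma tg_tprod V P (F : nat -> rterm) s :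
  (forall x, x \in s -> tgood V P (F x)) -> tgood V P (tprod (map F s)).
Proof.
elim: s => [|x s IH] H /=; first by [].
apply: tg_mul; first by apply: H; rewrite mem_head.
by apply: IH => y hy; apply: H; rewrite in_cons hy orbT.
Qed.

Lemma fg_memf V P n yf l t : tgood V P t -> (forall j, (j < l)%N -> tgood V P (yf j)) ->
  fgood V P (memf n yf l t).
Proof.
move=> Ht Hy; apply: fg_exs; apply: fg_eq; first by apply: (tgoodW Ht) => v; left.
apply: tg_tsum => j; rewrite mem_iota add0n => hj; apply: tg_mul.
  by apply: (tgoodW (Hy j hj)) => v; left.
by apply: tg_var; right; rewrite leq_addr ltn_add2l.
Qed.

Lemma fg_primef V P N yf l : (forall j, (j < l)%N -> tgood V P (yf j)) ->
  fgood V P (primef N yf l).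
Proof.
move=> Hy; apply: fg_and; first by apply: fg_not; apply: fg_memf => //; apply: tg_one.
have Hy' : forall j, (j < l)%N -> tgood (fun v => V v \/ (N <= v < N + 2)%N) P (yf j).
  by move=> j hj; apply: (tgoodW (Hy j hj)) => v; left.
have V0 : (fun v => V v \/ (N <= v < N + 2)%N) N by right; rewrite leqnn /= addn2.
have V1 : (fun v => V v \/ (N <= v < N + 2)%N) N.+1 by right; rewrite leqnSn /= addn2.
apply: fg_alls; apply: fg_imp; first by apply: fg_memf => //; apply: tg_mul; apply: tg_var.
by apply: fg_or; apply: fg_memf => //; apply: tg_var.
Qed.

Lemma fg_zerof V P m (k : 'I_m -> nat) N (Y : nat -> nat -> rterm) :
  (forall (i : 'I_m) j, (j < k i)%N -> tgood V P (Y i j)) -> fgood V P (zerof k N Y).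
Proof.
move=> HY; apply: fg_alls; apply: fg_imp.
  apply: fg_fand => i _; apply: fg_memf.
    by apply: tg_var; right; rewrite leq_addr ltn_add2l ltn_ord.
  by move=> j hj; apply: (tgoodW (HY i j hj)) => v; left.
apply: fg_eq => //; apply: tg_tprod => i; rewrite mem_iota add0n => hi.
by apply: tg_var; right; rewrite leq_addr ltn_add2l.
Qed.

Lemma fg_build V P m (k Lam : 'I_m -> nat) N (Y : nat -> nat -> rterm) :
  (forall (i : 'I_m) j, (j < k i)%N -> tgood V P (Y i j)) -> fgood V P (build k Lam N Y).
Proof.
move=> HY; apply: fg_and; first by apply: fg_fand => i _; apply: fg_primef; apply: HY.
apply: fg_and; first exact: fg_zerof.
apply: fg_fand => i _; case: ifP => _ //; apply: fg_memf; [exact: tg_natt | exact: HY].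
Qed.



Lemma idlf0 (R : comPzRingType) (bf : nat -> R) l : idlf bf l 0.
Proof. by exists (fun=> 0); rewrite big1 // => j _; rewrite mulr0. Qed.
Lemma idlfD (R : comPzRingType) (bf : nat -> R) l x y :
  idlf bf l x -> idlf bf l y -> idlf bf l (x + y).
Proof.
case=> z -> [w ->]; exists (fun j => z j + w j).
by rewrite -big_split; apply: eq_bigr => j _; rewrite mulrDr.
Qed.
Lemma idlfN (R : comPzRingType) (bf : nat -> R) l x : idlf bf l x -> idlf bf l (- x).
Proof.
case=> z ->; exists (fun j => - z j).
by rewrite -sumrN; apply: eq_bigr => j _; rewrite mulrN.
Qed.
Lemma idlfM (R : comPzRingType) (bf : nat -> R) l r x : idlf bf l x -> idlf bf l (r * x).
Proof.
case=> z ->; exists (fun j => r * z j).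
by rewrite mulr_sumr; apply: eq_bigr => j _; rewrite mulrCA.
Qed.

Lemma idlf_eq (R : comPzRingType) (bf bf' : nat -> R) l :
  (forall j, (j < l)%N -> bf j = bf' j) -> idlf bf l = idlf bf' l.
Proof.
move=> H; apply: functional_extensionality => x; apply: propositional_extensionality.
exact: idlf_ext.
Qed.

Lemma idl_idlf (R : comPzRingType) (b : seq R) : idl b = idlf (fun j => b`_j) (size b).
Proof.
apply: functional_extensionality => x; apply: propositional_extensionality.
split.
- by case=> z [_ ->]; exists (fun j => z`_j).
- case=> z ->; exists (mkseq z (size b)); rewrite size_mkseq; split => //.
  by apply: eq_bigr => j _; rewrite nth_mkseq.
Qed.

Lemma char_prime (R : comPzRingType) (I : R -> Prop) (bf : nat -> R) l c :
  I = idlf bf l -> prime_ideal I -> prime c -> (quot_char I c <-> I c%:R).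
Proof.
move=> -> [h1 _] pc; split; first by move=> H; apply/(H c); rewrite dvdnn.
move=> hc d; split; last first.
  by move=> /dvdnP [q ->]; rewrite natrM; apply: idlfM.
move=> hd; apply/negPn/negP => nd.
have d0 : (0 < d)%N by case: d nd {hd} => //; rewrite dvdn0.
have cop : coprime d c by rewrite coprime_sym prime_coprime.
case: (egcdnP c d0) => km kn E _.
move: cop; rewrite /coprime => /eqP g1; rewrite g1 in E.
apply: h1.
have -> : (1 : R) = (km * d)%:R - (kn * c)%:R by rewrite E natrD addrC addKr.
by apply: idlfD; [rewrite natrM; apply: idlfM | apply: idlfN; rewrite natrM; apply: idlfM].
Qed.

Lemma char_zero (R : comPzRingType) (I : R -> Prop) (bf : nat -> R) l :
  I = idlf bf l -> (quot_char I 0 <-> forall d, I d%:R -> d = 0%N).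
Proof.
move=> ->; split.
- by move=> H d /H; rewrite dvd0n => /eqP.
- move=> H d; split; first by move/H ->.
  by rewrite dvd0n => /eqP ->; apply: idlf0.
Qed.

Lemma char_exists (R : comPzRingType) (I : R -> Prop) (bf : nat -> R) l :
  I = idlf bf l -> prime_ideal I -> quot_char I 0 \/ exists p, prime p /\ quot_char I p.
Proof.
move=> EI PI; case: (classic (forall d, I d%:R -> d = 0%N)) => H.
  by left; apply/(char_zero EI).
right; have [d [hd nd]] : exists d, I d%:R /\ d <> 0%N.
  by apply: NNPP => H'; apply: H => d hd; apply: NNPP => nd; apply: H'; exists d.
elim: d {-2}d (leqnn d) hd nd => [|n IH] d le hd nd; first by move: le nd; lia.
case: (ltngtP d 1) => [d0|d1|d1]; first by move: d0 nd; lia.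
- have pp := pdiv_prime d1.
  have [q Eq] : exists q, d = (q * pdiv d)%N by apply/dvdnP; apply: pdiv_dvd.
  move: hd; rewrite Eq natrM => /(proj2 PI) [hq|hp].
  + apply: (IH q) => //; last by move=> q0; move: Eq; rewrite q0 mul0n => E; rewrite E in d1.
    have p2 := prime_gt1 pp.
    have le2 : (q * pdiv d <= n.+1)%N by rewrite -Eq.
    move: le2 p2; generalize (pdiv d) => pd; nia.
  + by exists (pdiv d); split => //; apply/(char_prime EI PI pp).
- by move: hd; rewrite d1 => /(proj1 PI).
Qed.

Lemma zero_prod_iff (R : comPzRingType) m (I : 'I_m -> R -> Prop) :
  zero_ideal (prod_ideal I) <->
  forall f : 'I_m -> R, (forall i, I i (f i)) -> \prod_(i < m) f i = 0.
Proof.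
split.
- move=> H f Hf; apply: H; exists 1%N, (fun _ i => f i); split => //.
  by rewrite big_ord1.
- by move=> H x [n [f [Hf ->]]]; apply: big1 => l _; apply: H => i; apply: Hf.
Qed.

Lemma bprop_iff (R : comPzRingType) m (k Lam : 'I_m -> nat) (b : 'I_m -> seq R) :
  (forall i, size (b i) = k i) -> (forall i, prime (Lam i) \/ Lam i = 0%N) ->
  bprop k Lam (fun i j => (b i)`_j) <->
  ((forall i, prime_ideal (idl (b i))) /\
   zero_ideal (prod_ideal (fun i => idl (b i))) /\
   (forall i, (0 < Lam i)%N -> quot_char (idl (b i)) (Lam i))).
Proof.
move=> hs hL.
have E i : idl (b i) = idlf (fun j => (b i)`_j) (k i) by rewrite idl_idlf hs.
have EF : (fun i => idl (b i)) = (fun i => idlf (fun j => (b i)`_j) (k i)).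
  by apply: functional_extensionality => i; apply: E.
have pL i : (0 < Lam i)%N -> prime (Lam i).
  by case: (hL i) => // ->.
rewrite EF zero_prod_iff /bprop; split; case=> h1 [h2 h3].
- have h1' i : prime_ideal (idl (b i)) by rewrite E; exact: h1.
  split => //; split => // i hi.
  by rewrite (char_prime (E i) (h1' i) (pL i hi)) E; apply: h3.
- split; first by move=> i; rewrite -E.
  split => // i hi.
  by rewrite -E -(char_prime (E i) (h1 i) (pL i hi)); apply: h3.
Qed.

Lemma nil_of_false (T : eqType) (s : seq T) : (forall v, v \in s -> False) -> s = [::].
Proof. by case: s => // a s H; exfalso; apply: (H a); rewrite mem_head. Qed.

Lemma bprop_ext (R : comPzRingType) m (k Lam : 'I_m -> nat) (bf bf' : 'I_m -> nat -> R) :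
  (forall (i : 'I_m) j, (j < k i)%N -> bf i j = bf' i j) ->
  bprop k Lam bf <-> bprop k Lam bf'.
Proof.
move=> H; have E i : idlf (bf i) (k i) = idlf (bf' i) (k i) by apply: idlf_eq; apply: H.
rewrite /bprop; split; case=> h1 [h2 h3]; split.
- by move=> i; rewrite -E.
- split; first by move=> f hf; apply: h2 => i; rewrite E.
  by move=> i hi; rewrite -E; apply: h3.
- by move=> i; rewrite E.
- split; first by move=> f hf; apply: h2 => i; rewrite -E.
  by move=> i hi; rewrite E; apply: h3.
Qed.

Definition Dform m (k Lam : 'I_m -> nat) := build k Lam 0 (fun i j => RPar i j).

Lemma part1 (R : comPzRingType) m (k Lam : 'I_m -> nat) (b : 'I_m -> seq R) :
  (forall i, size (b i) = k i) -> (forall i, prime (Lam i) \/ Lam i = 0%N) ->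
  sat b (Dform k Lam) <->
  ((forall i, prime_ideal (idl (b i))) /\
   zero_ideal (prod_ideal (fun i => idl (b i))) /\
   (forall i, (0 < Lam i)%N -> quot_char (idl (b i)) (Lam i))).
Proof.
move=> hs hL; rewrite /sat /Dform buildP; last by move=> i j _; apply: tlow_novar.
rewrite -(bprop_iff hs hL); apply: bprop_ext => i j _.
by rewrite /= /par_env valK.
Qed.

Lemma Dform_in m (k Lam : 'I_m -> nat) : formula_in k (Dform k Lam).
Proof.
have := @fg_build (fun _ => False) (fun ij => exists i : 'I_m, ij.1 = i /\ (ij.2 < k i)%N)
  m k Lam 0 (fun i j => RPar i j).
case.
- by move=> i j hj; split => // ij; rewrite inE => /eqP ->; exists i.
- by move=> h1 h2; split => //; apply: nil_of_false.
Qed.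

Lemma enc_bound m (k : 'I_m -> nat) K (i : 'I_m) j :
  (forall i, k i <= K)%N -> (j < k i)%N -> (i * K + j < m * K)%N.
Proof.
move=> hK hj; have := hK i; have := ltn_ord i; move: hj.
generalize (k i) (nat_of_ord i) => a b; nia.
Qed.

Definition encS m (k Lam : 'I_m -> nat) K :=
  exs 0 (m * K) (build k Lam (m * K) (fun i j => RVar (i * K + j))).

Lemma enc_sentence m (k Lam : 'I_m -> nat) K : (forall i, k i <= K)%N ->
  sentence (encS k Lam K).
Proof.
move=> hK.
have := @fg_exs (fun _ => False) (m * K) (fun _ => False) 0
   (build k Lam (m * K) (fun i j => RVar (i * K + j))).
case.
- apply: fg_build => i j hj; split => // v; rewrite inE => /eqP ->; right.
  by rewrite add0n /=; apply: enc_bound.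
- by move=> h1 h2; split; apply: nil_of_false.
Qed.

Lemma enc_models (R : comPzRingType) m (k Lam : 'I_m -> nat) K : (forall i, k i <= K)%N ->
  models R (encS k Lam K) <-> exists z : nat -> R, bprop k Lam (fun i j => z (i * K + j)%N).
Proof.
move=> hK; rewrite /models /encS exsP.
have E z : fholds (fun _ _ => 0 : R) (upd (fun=> 0) 0 z (m * K))
             (build k Lam (m * K) (fun i j => RVar (i * K + j))) <->
           bprop k Lam (fun i j => z (i * K + j)%N).
  rewrite buildP; last by move=> i j hj; apply: tlow_var; apply: enc_bound.
  apply: bprop_ext => i j hj /=.
  by have := @upd_in R (fun=> 0) 0 z (m * K) (i * K + j) (enc_bound hK hj); rewrite add0n.
by split; case=> z /E h; exists z.
Qed.

Theorem mainTheorem17 :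
  forall (m : nat) (Lam : 'I_m -> nat) (k : 'I_m -> nat),
  (1 <= m)%N ->
  (forall i, prime (Lam i) \/ Lam i = 0%N) ->
  exists D : rform,
    formula_in k D /\
    (forall (B : comPzRingType) (b : 'I_m -> seq B),
       (forall i, size (b i) = k i) ->
       (sat b D <->
        ((forall i, prime_ideal (idl (b i))) /\
         zero_ideal (prod_ideal (fun i => idl (b i))) /\
         (forall i, (0 < Lam i)%N -> quot_char (idl (b i)) (Lam i))))) /\
    (forall (A : comPzRingType) (a : 'I_m -> seq A),
       (forall i, prime_ideal (idl (a i))) ->
       zero_ideal (prod_ideal (fun i => idl (a i))) ->
       (forall i, quot_char (idl (a i)) (Lam i)) ->
       (forall (a' : 'I_m -> seq A) (c' : 'I_m -> nat),
          (forall i, prime_ideal (idl (a' i))) ->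
          zero_ideal (prod_ideal (fun i => idl (a' i))) ->
          (forall i, quot_char (idl (a' i)) (c' i)) ->
          (number_of_zeros Lam <= number_of_zeros c')%N) ->
       forall (B : comPzRingType), elem_equiv A B ->
       forall b : 'I_m -> seq B,
         (forall i, size (b i) = k i) ->
         sat b D ->
         (forall i, prime_ideal (idl (b i))) /\
         zero_ideal (prod_ideal (fun i => idl (b i))) /\
         (forall i, quot_char (idl (b i)) (Lam i))).
Proof.
move=> m Lam k hm hL; exists (Dform k Lam); split; first exact: Dform_in.
split; first by move=> B b hs; apply: part1.
move=> A a hpa hza hca hmin B hAB b hs hsat.
have [hp [hz hc]] := (part1 hs hL).1 hsat.
split => //; split => // i.
case: (posnP (Lam i)) => [L0|Lpos]; last exact: hc.
rewrite L0; apply: NNPP => nq.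
case: (char_exists (idl_idlf (b i)) (hp i)) => [//|[p [pp qp]]].
pose Lam' j := if j == i then p else Lam j.
have hL' : forall j, prime (Lam' j) \/ Lam' j = 0%N.
  by move=> j; rewrite /Lam'; case: eqP => _; [left | apply: hL].
have hB : bprop k Lam' (fun i j => (b i)`_j).
  apply/(bprop_iff hs hL'); split => //; split => // j.
  by rewrite /Lam'; case: eqP => [-> _ | _ hj]; [exact: qp | exact: hc].
pose K := \max_(i < m) k i.
have hK : forall i, (k i <= K)%N by move=> j; apply: leq_bigmax.
have MB : models B (encS k Lam' K).
  apply/(enc_models _ _ hK).
  exists (fun v => if insub (v %/ K)%N is Some i then (b i)`_(v %% K) else 0).
  apply: (proj2 (bprop_ext _ _) hB) => j l hl.
  have K0 : (0 < K)%N by apply: leq_trans (hK j); apply: leq_ltn_trans hl.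
  have hlK : (l < K)%N by apply: leq_trans (hK j).
  rewrite divnMDl // divn_small // addn0 valK modnMDl modn_small //.
have /(enc_models _ _ hK) [z hA] := (hAB _ (enc_sentence Lam' hK)).2 MB.
pose a' (j : 'I_m) := mkseq (fun l => z (j * K + l)%N) (k j).
have ha's : forall j, size (a' j) = k j by move=> j; rewrite size_mkseq.
have hA' : bprop k Lam' (fun j l => (a' j)`_l).
  by apply: (proj1 (bprop_ext _ _) hA) => j l hl; rewrite nth_mkseq.
have [hp' [hz' hc']] := (bprop_iff ha's hL').1 hA'.
have Hc : forall j, exists c, quot_char (idl (a' j)) c /\ ((0 < Lam' j)%N -> c = Lam' j).
  move=> j; case: (posnP (Lam' j)) => [L0'|Lp]; last by exists (Lam' j); split; [apply: hc'|].
  case: (char_exists (idl_idlf (a' j)) (hp' j)) => [h0|[q [_ hq]]].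
    by exists 0%N; split => //; rewrite L0'.
  by exists q; split => //; rewrite L0'.
pose c' j := proj1_sig (constructive_indefinite_description _ (Hc j)).
have hc'1 : forall j, quot_char (idl (a' j)) (c' j).
  by move=> j; exact: (proj1 (proj2_sig (constructive_indefinite_description _ (Hc j)))).
have hc'2 : forall j, (0 < Lam' j)%N -> c' j = Lam' j.
  by move=> j; exact: (proj2 (proj2_sig (constructive_indefinite_description _ (Hc j)))).
have H1 := hmin a' c' hp' hz' hc'1.
have H2 : (number_of_zeros c' <= number_of_zeros Lam')%N.
  apply: subset_leq_card; apply/subsetP => j; rewrite !inE => /eqP cj.
  apply/eqP; apply: NNPP => nj.
  have : (0 < Lam' j)%N by move: nj; case: (Lam' j).
  by move/hc'2; rewrite cj => E; apply: nj.
have H3 : (number_of_zeros Lam' < number_of_zeros Lam)%N.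
  apply: proper_card; apply/properP; split.
    apply/subsetP => j; rewrite !inE /Lam' /=; case: (eqVneq j i) => [->|ne]; rewrite ?eqxx ?(negbTE ne) //.
    by move=> /eqP p0; move: (prime_gt0 pp); rewrite p0.
  exists i; first by rewrite inE L0.
  by rewrite inE /Lam' /= eqxx; move: (prime_gt0 pp); case: (p).
move: H1 H2 H3; lia.
Qed.
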